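(* Let $G$ be a finite group, let $\operatorname{Irr}_\mathbb{R}(G)$ denote the set of irreducible complex characters of $G$ that are real-valued, and let $k_r(G)=|\operatorname{Irr}_\mathbb{R}(G)|$, which equals the number of real conjugacy classes of $G$. For $n\in\mathbb{N}$ put \[s(n):=|\{(g_1,\ldots,g_n)\in G^n:\ g_1^2g_2^2\cdots g_n^2=1\}|.\] Then the multiset $\{\chi(1)\epsilon(\chi):\chi\in\operatorname{Irr}_\mathbb{R}(G)\}$ is uniquely determined by $|G|$ and the numbers $s(1),s(2),\ldots,s(k_r(G)+1)$. Precisely: if $H$ is another finite group with $|H|=|G|$, $k_r(H)=k_r(G)$ and $s_H(n)=s_G(n)$ for $n=1,\ldots,k_r(G)+1$, then the multisets $\{\chi(1)\epsilon(\chi):\chi\in\operatorname{Irr}_\mathbb{R}(G)\}$ and $\{\psi(1)\epsilon(\psi):\psi\in\operatorname{Irr}_\mathbb{R}(H)\}$ coincide. In particular, $k_r(G)=\frac{s(2)}{|G|}$, and hence the number of irreducible characters of $G$ with Frobenius--Schur indicator $1$ is determined by $|G|$ and the numbers $s(n)$, $n\ge 1$.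
   Context: For an irreducible complex character $\chi$ of a finite group $G$, the Frobenius--Schur indicator is $\epsilon(\chi):=\frac{1}{|G|}\sum_{g\in G}\chi(g^2)\in\{0,1,-1\}$; it is nonzero exactly when $\chi$ is real-valued. A conjugacy class $C$ of $G$ is real if $C=\{x^{-1}:x\in C\}$. Multisets are counted with multiplicity. *)

(* Defs.v *)
From HB Require Import structures.
From mathcomp Require Import all_boot all_order all_algebra all_fingroup all_solvable all_field all_character.
Set Implicit Arguments. Unset Strict Implicit. Unset Printing Implicit Defensive.
Import GRing.Theory Num.Theory.
Local Open Scope ring_scope.

Definition FSind (gT : finGroupType) (G : {group gT}) (chi : 'CF(G)) : algC :=
  (#|G|%:R)^-1 * \sum_(g in G) chi (g ^+ 2)%g.

Definition IrrR (gT : finGroupType) (G : {group gT}) : {set Iirr G} :=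
  [set i : Iirr G | cfReal 'chi[G]_i].

Definition kr (gT : finGroupType) (G : {group gT}) : nat := #|IrrR G|.

Definition sq_count (gT : finGroupType) (G : {group gT}) (n : nat) : nat :=
  #|[set t : {ffun 'I_n -> gT} |
      [forall i, t i \in G] && ((\prod_(i < n) (t i) ^+ 2)%g == 1%g)]|.

(* The multiset {chi(1) eps(chi) : chi in Irr_R(G)} as a sequence
   (to be compared up to permutation). *)
Definition degFS (gT : finGroupType) (G : {group gT}) : seq algC :=
  [seq 'chi[G]_i 1%g * FSind 'chi[G]_i | i in IrrR G].

(* Main.v *)
Require Import Defs.
From HB Require Import structures.
From mathcomp Require Import all_boot all_order all_algebra all_fingroup all_solvable all_field all_character.
From mathcomp Require Import ring.
Set Implicit Arguments. Unset Strict Implicit. Unset Printing Implicit Defensive.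
Import GRing.Theory Num.Theory.
Local Open Scope ring_scope.

Section PolyPart.
Variable K : nat.

Definition Fp (s : seq algC) : {poly algC} := \prod_(y <- s) ('X - y%:P).
Definition ty (y : algC) : {poly algC} := y^-1 *: \sum_(i < K) (y^-1 *: 'X) ^+ i.
Definition Tp (s : seq algC) : {poly algC} := \sum_(y <- s) ty y.

Lemma ty_mul y : y != 0 -> ('X - y%:P) * ty y = y ^- K *: 'X^K - 1.
Proof.
move=> y0; rewrite /ty.
have -> : 'X - y%:P = y *: (y^-1 *: 'X - 1).
  have yy : y / y = 1 := mulfV y0.
  by rewrite scalerBr scalerA yy scale1r -mul_polyC mulr1.
have yy : y * y^-1 = 1 := mulfV y0.
have yy2 : y^-1 * y = 1 := mulVf y0.
rewrite -scalerAr -scalerAl scalerA yy2 scale1r -subrX1 exprZn.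
by congr (_ *: _ - _); exact: exprVn.
Qed.

Lemma Tp_coef s : Tp s = \sum_(i < K) (\sum_(y <- s) y ^- i.+1) *: 'X^i.
Proof.
rewrite /Tp /ty.
under eq_bigr do rewrite scaler_sumr.
rewrite exchange_big /=; apply: eq_bigr => i _.
rewrite scaler_suml; apply: eq_bigr => y _.
by rewrite exprZn scalerA; congr (_ *: _); rewrite exprVn -invfM -exprS.
Qed.

Lemma Fp_dvd s : 0 \notin s -> 'X^K %| (Fp s)^`() + Fp s * Tp s.
Proof.
elim: s => [|y s IH]; first by rewrite /Fp /Tp !big_nil derivC mulr0 addr0 dvdp0.
rewrite inE negb_or eq_sym => /andP[y0 /IH {}IH].
rewrite /Fp /Tp !big_cons derivM derivXsubC -/(Fp s) -/(Tp s).
have -> : 1 * Fp s + ('X - y%:P) * (Fp s)^`() + ('X - y%:P) * Fp s * (ty y + Tp s)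
   = ('X - y%:P) * ((Fp s)^`() + Fp s * Tp s) + Fp s * (1 + ('X - y%:P) * ty y) by ring.
rewrite ty_mul //.
have -> : 1 + (y ^- K *: 'X^K - 1) = y ^- K *: 'X^K :> {poly algC}.
  by rewrite addrC subrK.
rewrite -scalerAr dvdp_add ?dvdp_mull // dvdpZr ?dvdp_mulIr //.
by rewrite invr_eq0 expf_neq0.
Qed.

Lemma rec_zero (D T : {poly algC}) :
  'X^K %| D^`() + D * T -> D`_0 = 0 -> forall j, (j <= K)%N -> D`_j = 0.
Proof.
move=> dv D0.
have Hc : forall l, (l < K)%N -> (D^`() + D * T)`_l = 0.
  move=> l lK; move: dv; rewrite dvdp_eq => /eqP ->.
  by rewrite coefMXn lK.
suff H : forall j, (j <= K)%N -> forall i, (i <= j)%N -> D`_i = 0.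
  by move=> j jK; apply: (H j jK j).
elim=> [_ i|j IH jK i]; first by rewrite leqn0 => /eqP ->.
rewrite leq_eqVlt => /orP[/eqP ->|]; last by rewrite ltnS; apply: IH; apply: ltnW.
have := Hc j jK; rewrite coefD coef_deriv coefM big1 ?addr0.
  by move/eqP; rewrite mulrn_eq0 /= => /eqP.
move=> [k /= kS] _; rewrite IH ?mul0r //; first exact: ltnW.
Qed.

End PolyPart.

Lemma Fp_last (s : seq algC) : (Fp s)`_(size s) = 1.
Proof.
have := lead_coef_prod_XsubC s xpredT id.
by rewrite lead_coefE size_prod_XsubC.
Qed.

Lemma Fp_sub (y : algC) s : (Fp (y :: s))`_(size s) = - \sum_(x <- y :: s) x.
Proof.
elim: s y => [|z s IH] y.
  by rewrite /Fp !big_cons !big_nil mulr1 coefB coefX coefC /= sub0r addr0.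
rewrite /Fp big_cons -/(Fp (z :: s)) mulrBl coefB coefXM coefCM /=.
rewrite IH (Fp_last (z :: s)) [X in _ = - X]big_cons mulr1 opprD addrC.
by []. Qed.

Lemma Fp_big (s : seq algC) j : (size s < j)%N -> (Fp s)`_j = 0.
Proof. by move=> sj; rewrite nth_default // size_prod_XsubC. Qed.

Lemma power_sums_perm (s1 s2 : seq algC) :
  size s1 = size s2 -> 0 \notin s1 -> 0 \notin s2 ->
  \sum_(y <- s1) y = \sum_(y <- s2) y -> \sum_(y <- s1) y != 0 ->
  (forall m, (0 < m < size s1)%N -> \sum_(y <- s1) y ^- m = \sum_(y <- s2) y ^- m) ->
  perm_eq s1 s2.
Proof.
case: s1 => [|y1 s1]; case: s2 => [|y2 s2].
- by move=> *; apply: perm_refl.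
- by move=> /= [].
- by move=> /= [].
move=> [sz] n1 n2 eS nS ePm.
set K := size s1.
have eT : Tp K (y1 :: s1) = Tp K (y2 :: s2).
  rewrite !Tp_coef; apply: eq_bigr => i _; rewrite ePm //.
  by rewrite ltnS /=; case: i.
have d1 := Fp_dvd K n1; have d2 := Fp_dvd K n2.
set F1 := Fp (y1 :: s1) in d1 *; set F2 := Fp (y2 :: s2) in d2 *.
set T := Tp K (y2 :: s2) in eT d2; rewrite eT in d1.
have lin : forall a b : algC, 'X^K %| (a%:P * F1 - b%:P * F2)^`() + (a%:P * F1 - b%:P * F2) * T.
  move=> a b; rewrite derivB !derivM !derivC !mul0r !add0r.
  have -> : a%:P * F1^`() - b%:P * F2^`() + (a%:P * F1 - b%:P * F2) * T =
     a%:P * (F1^`() + F1 * T) - b%:P * (F2^`() + F2 * T) by ring.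
  by rewrite dvdp_sub ?dvdp_mull.
set a := F1`_0; set b := F2`_0.
have eab : a = b.
  have := rec_zero (lin b a); rewrite coefB !coefCM mulrC subrr => /(_ erefl K (leqnn K)).
  rewrite coefB !coefCM /F1 /F2 /K {2}sz !Fp_sub -eS.
  move/eqP; rewrite -mulrBl mulf_eq0 oppr_eq0 (negPf nS) orbF subr_eq0.
  by move/eqP.
have := rec_zero (lin 1 1); rewrite coefB !coefCM !mul1r -/a -/b eab subrr => /(_ erefl) Dz.
apply: prod_XsubC_eq; apply/eqP; rewrite -subr_eq0; apply/eqP/polyP => j.
rewrite coef0.
case: (leqP j K) => [/Dz //|]; rewrite leq_eqVlt => /orP[/eqP <-|Kj].
  by rewrite coefB /F1 /F2 /K (Fp_last (y1 :: s1)) sz (Fp_last (y2 :: s2)) subrr.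
by rewrite coefB !Fp_big ?subrr //= -?sz.
Qed.

Section Count.
Variables (gT : finGroupType) (G : {group gT}).

Definition Nc m (g : gT) : nat :=
  #|[set t : {ffun 'I_m -> gT} |
      [forall i, t i \in G] && ((\prod_(i < m) (t i) ^+ 2)%g == g)]|.

Lemma sq_countE m : sq_count G m = Nc m 1%g.
Proof. by []. Qed.

Lemma Nc0 g : Nc 0 g = (g == 1%g).
Proof.
rewrite /Nc.
have -> : [set t : {ffun 'I_0 -> gT} | [forall i, t i \in G] &&
      ((\prod_(i < 0) (t i) ^+ 2)%g == g)] = if 1%g == g then setT else set0.
  apply/setP => t; rewrite !inE big_ord0.
  have -> : [forall i, t i \in G] by apply/forallP => -[].
  by case: (1%g == g); rewrite inE.
rewrite eq_sym; case: (g == 1%g); last by rewrite cards0.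
by rewrite cardsT card_ffun card_ord expn0.
Qed.

Definition restr m (t : {ffun 'I_m.+1 -> gT}) : {ffun 'I_m -> gT} :=
  [ffun j => t (widen_ord (leqnSn m) j)].
Definition ext m (x : gT) (u : {ffun 'I_m -> gT}) : {ffun 'I_m.+1 -> gT} :=
  [ffun i => if unlift ord_max i is Some j then u j else x].

Lemma ext_max m x u : ext (m:=m) x u ord_max = x.
Proof. by rewrite ffunE unlift_none. Qed.

Lemma ext_widen m x u (j : 'I_m) : ext x u (widen_ord (leqnSn m) j) = u j.
Proof.
have E : widen_ord (leqnSn m) j = lift ord_max j.
  by apply: val_inj; rewrite /= /bump leqNgt ltn_ord.
rewrite E.
by rewrite ffunE liftK.
Qed.

Lemma restr_ext m x u : restr (ext (m:=m) x u) = u.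
Proof. by apply/ffunP => j; rewrite ffunE ext_widen. Qed.

Lemma ext_restr m (t : {ffun 'I_m.+1 -> gT}) : ext (t ord_max) (restr t) = t.
Proof.
apply/ffunP => i; rewrite ffunE.
case: unliftP => [j ->|->] //.
by rewrite /restr ffunE; congr (t _); apply: val_inj; rewrite /= /bump leqNgt ltn_ord.
Qed.

Lemma NcS m g : Nc m.+1 g = \sum_(x in G) Nc m (g * (x ^+ 2)^-1).
Proof.
rewrite /Nc -sum1dep_card.
rewrite (partition_big (fun t : {ffun 'I_m.+1 -> gT} => t ord_max) (mem G)); last first.
  by move=> t /andP[/forallP/(_ ord_max)].
apply: eq_bigr => x Gx; rewrite -sum1dep_card.
rewrite (reindex_onto (ext x) (@restr m)); last first.
  by move=> t /andP[_ /eqP <-]; rewrite ext_restr.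
apply: eq_bigl => u; rewrite restr_ext eqxx andbT ext_max eqxx andbT.
rewrite big_ord_recr /= ext_max.
under eq_bigr do rewrite ext_widen.
apply/andP/andP => [[/forallP Hf Hp]|[/forallP Hf Hp]]; split.
- by apply/forallP => j; have := Hf (widen_ord (leqnSn m) j); rewrite ext_widen.
- by rewrite -(eqP Hp) mulgK.
- apply/forallP => i; rewrite ffunE; case: (unlift ord_max i) => [j|] //.
- by rewrite (eqP Hp) mulgKV.
Qed.

End Count.

Section FS.
Variables (gT : finGroupType) (G : {group gT}) (n : nat).
Variable rG : mx_representation algC G n.
Hypothesis irrG : mx_irreducible rG.
Local Notation chi := (cfRepr rG).

Definition Qf (M : 'M[algC]_n) := \sum_(x in G) (rG x)^T *m M *m rG x.
Definition inv_form (F : 'M[algC]_n) :=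
  forall h, h \in G -> (rG h)^T *m F *m rG h = F.

Lemma Qf_inv M : inv_form (Qf M).
Proof.
move=> h Gh; rewrite /Qf mulmx_sumr mulmx_suml.
rewrite [RHS](reindex_inj (mulIg h)) /=; apply: eq_big => [x|x Gx]; first by rewrite groupMr.
by rewrite repr_mxM // trmx_mul !mulmxA.
Qed.

Lemma inv_shift F : inv_form F -> forall h, h \in G -> F *m rG h = (rG (h^-1)%g)^T *m F.
Proof.
move=> iF h Gh; rewrite -{1}(iF (h^-1)%g) ?groupV //.
by rewrite -!mulmxA -repr_mxM ?groupV // mulVg repr_mx1 mulmx1.
Qed.

Lemma inv_unit F : inv_form F -> F != 0 -> F \in unitmx.
Proof.
move=> iF nzF; have modF : mxmodule rG F.
  by apply/mxmoduleP => h Gh; rewrite inv_shift // submxMl.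
by case/mx_irrP: irrG => _ /(_ F modF nzF); rewrite row_full_unit.
Qed.

Lemma inv_real F : inv_form F -> F != 0 -> cfReal chi.
Proof.
move=> iF nzF; have uF := inv_unit iF nzF.
apply/eqP/cfun_inP => x Gx; rewrite cfConjCE.
have ex : rG x = invmx F *m ((rG (x^-1)%g)^T *m F).
  by rewrite -inv_shift // mulKmx.
have : chi x = chi (x^-1)%g.
  by rewrite !cfunE groupV Gx ex mxtrace_mulC -mulmxA mulmxV // mulmx1 mxtrace_tr.
by move=> E; rewrite -char_inv ?cfRepr_char // -E.
Qed.

Lemma entry_delta (X Y : 'M[algC]_n) a b i j :
  (X *m delta_mx a b *m Y) i j = X i a * Y b j.
Proof.
rewrite mxE (bigD1 b) //= big1 ?addr0 => [|k nkb].
  rewrite mxE (bigD1 a) //= big1 ?addr0 => [|l nla].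
    by rewrite mxE !eqxx mulr1.
  by rewrite mxE (negPf nla) mulr0.
rewrite mxE big1 ?mul0r // => l _; rewrite mxE.
by rewrite (negPf nkb) andbF mulr0.
Qed.

Lemma S_eq : \sum_(x in G) \tr (rG x *m rG x) =
  \sum_a \sum_b (Qf (delta_mx a b)) b a.
Proof.
symmetry; transitivity (\sum_a \sum_b \sum_(x in G)
   ((rG x)^T *m delta_mx a b *m rG x) b a).
  by apply: eq_bigr => a _; apply: eq_bigr => b _; rewrite summxE.
under eq_bigr do rewrite exchange_big /=.
rewrite exchange_big /=; symmetry.
apply: eq_bigr => x Gx; rewrite /mxtrace.
apply: eq_bigr => a _; rewrite mxE; apply: eq_bigr => b _.
by rewrite entry_delta mxE.
Qed.

Lemma T_eq : \sum_(x in G) (\tr (rG x)) ^+ 2 =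
  \sum_a \sum_b (Qf (delta_mx a b)) a b.
Proof.
symmetry; transitivity (\sum_a \sum_b \sum_(x in G)
   ((rG x)^T *m delta_mx a b *m rG x) a b).
  by apply: eq_bigr => a _; apply: eq_bigr => b _; rewrite summxE.
under eq_bigr do rewrite exchange_big /=.
rewrite exchange_big /=; symmetry.
apply: eq_bigr => x Gx; rewrite /mxtrace expr2 big_distrlr /=.
apply: eq_bigr => a _; apply: eq_bigr => b _.
by rewrite entry_delta mxE.
Qed.

Definition nuR := #|G|%:R^-1 * \sum_(x in G) \tr (rG x *m rG x).

Lemma FS_nonreal : ~~ cfReal chi -> nuR = 0.
Proof.
move=> nR; rewrite /nuR S_eq big1 ?mulr0 // => a _; apply: big1 => b _.
have /eqP -> : Qf (delta_mx a b) == 0.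
  by apply: contraR nR => nz; exact: inv_real (Qf_inv _) nz.
by rewrite mxE.
Qed.

Lemma chi_irr : chi \in irr G.
Proof. by apply/irr_reprP; exists (Representation rG). Qed.

Lemma T_val : cfReal chi -> \sum_(x in G) (\tr (rG x)) ^+ 2 = #|G|%:R.
Proof.
move=> R; have : '[chi] = 1 by case/irrP: chi_irr => i ->; exact: cfnorm_irr.
rewrite cfdotE => h.
transitivity (#|G|%:R * (#|G|%:R^-1 * \sum_(x in G) chi x * (chi x)^*)); last first.
  by rewrite h mulr1.
rewrite mulVKf ?neq0CG //.
apply: eq_bigr => x Gx; have := congr1 (fun f : 'CF(G) => f x) (eqP R).
by rewrite /= cfConjCE => ->; rewrite cfunE Gx mulr1n expr2.
Qed.

Lemma FS_real : cfReal chi -> nuR ^+ 2 = 1.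
Proof.
move=> R.
have T0 : \sum_a \sum_b (Qf (delta_mx a b)) a b != 0 by rewrite -T_eq T_val // neq0CG.
have [a [b nz]] : exists a b, (Qf (delta_mx a b)) a b != 0.
  case: (pickP (fun ab : 'I_n * 'I_n => (Qf (delta_mx ab.1 ab.2)) ab.1 ab.2 != 0)).
    by move=> [a b] /= nz; exists a, b.
  move=> none; move: T0; rewrite big1 ?eqxx // => a _; rewrite big1 // => b _.
  by have := none (a, b); move/negbFE/eqP.
set A := Qf (delta_mx a b) in nz.
have nzA : A != 0 by apply: contraNneq nz => ->; rewrite mxE.
have iA : inv_form A := Qf_inv _.
have uA := inv_unit iA nzA.
have scal : forall F, inv_form F -> exists c, F = c *: A.
  move=> F iF; have cB : centgmx rG (invmx A *m F).
    apply/centgmxP => x Gx.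
    rewrite -mulmxA inv_shift // mulmxA.
    have -> : invmx A *m (rG (x^-1)%g)^T = rG x *m invmx A.
      rewrite -[(rG _)^T](mulmxK uA) -inv_shift // !mulmxA mulVmx // mul1mx //.
    by rewrite mulmxA.
  have /is_scalar_mxP[c ec] := mx_abs_irr_cent_scalar (groupC irrG) cB.
  by exists c; rewrite -[F](mulKVmx uA) ec mul_mx_scalar.
have [c eAT] : exists c, A^T = c *: A.
  apply: scal => h Gh; rewrite -[in RHS](iA h Gh) !trmx_mul trmxK !mulmxA //.
have eA : forall i j, A j i = c * A i j.
  by move=> i j; have := congr1 (fun M : 'M[algC]_n => M i j) eAT; rewrite !mxE.
have c2 : c ^+ 2 = 1.
  have e : A a b = c ^+ 2 * A a b by rewrite expr2 -mulrA -!eA.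
  have : (c ^+ 2 - 1) * A a b = 0 by rewrite mulrBl mul1r -e subrr.
  by move/eqP; rewrite mulf_eq0 (negPf nz) orbF subr_eq0 => /eqP.
have Sc : \sum_a \sum_b (Qf (delta_mx a b)) b a =
    c * \sum_a \sum_b (Qf (delta_mx a b)) a b.
  rewrite mulr_sumr; apply: eq_bigr => a' _; rewrite mulr_sumr; apply: eq_bigr => b' _.
  have [d ed] := scal _ (Qf_inv (delta_mx a' b')).
  by rewrite ed !mxE eA mulrCA.
suff -> : nuR = c by [].
by rewrite /nuR S_eq Sc -T_eq T_val // mulrCA mulVf ?neq0CG // mulr1.
Qed.

Lemma n_neq0 : n%:R != 0 :> algC.
Proof. by case/mx_irrP: irrG => n_gt0 _; rewrite pnatr_eq0 -lt0n. Qed.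

Lemma sq_sum_scalar : \sum_(x in G) rG x *m rG x = (nuR * #|G|%:R / n%:R)%:M.
Proof.
have cB : centgmx rG (\sum_(x in G) rG x *m rG x).
  apply/centgmxP => h Gh; rewrite mulmx_suml mulmx_sumr.
  rewrite [RHS](reindex_inj (conjg_inj h)) /=.
  apply: eq_big => [x|x Gx]; first by rewrite groupJr.
  rewrite -!repr_mxM ?groupM ?groupJ ?groupV //.
  have -> : (h * (x ^ h * x ^ h) = x * x * h)%g.
    by rewrite !conjgE !mulgA mulgV mul1g mulgK.
  by [].
have /is_scalar_mxP[c ec] := mx_abs_irr_cent_scalar (groupC irrG) cB.
have : \tr (\sum_(x in G) rG x *m rG x) = nuR * #|G|%:R.
  by rewrite /nuR mulrAC mulVf ?neq0CG ?mul1r // raddf_sum.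
rewrite ec mxtrace_scalar => h.
by rewrite -h -[c *+ n]mulr_natr mulfK ?n_neq0.
Qed.

Lemma char_sum g : g \in G ->
  \sum_(x in G) chi (g * (x ^+ 2)^-1)%g = nuR * #|G|%:R / chi 1%g * chi g.
Proof.
move=> Gg; rewrite cfRepr1 (reindex_inj invg_inj) /=.
transitivity (\sum_(x in G) \tr (rG g *m (rG x *m rG x))).
  apply: eq_big => [x|x]; first by rewrite groupV.
  rewrite groupV => Gx.
  rewrite expVgn invgK cfunE groupM ?groupX // mulr1n.
  by rewrite expgS expg1 !repr_mxM ?groupM.
rewrite -raddf_sum -mulmx_sumr sq_sum_scalar mul_mx_scalar /= mxtraceZ.
by rewrite cfunE Gg mulr1n.
Qed.

End FS.

Lemma alg1 (d u g : algC) j : d != 0 -> u ^+ 2 = 1 ->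
  d * d * (u * g / d) ^+ j.+2 = g ^+ j.+2 * (d * u) ^- j.
Proof.
move=> d0 u2.
have u0 : u != 0 by apply: contra_eq_neq u2 => ->; rewrite expr0n /= eq_sym oner_eq0.
have uinv : u^-1 = u by apply: (mulfI u0); rewrite mulfV // -expr2 u2.
rewrite -exprVn invfM uinv.
have -> : u * g / d = d^-1 * u * g by rewrite [d^-1 * u]mulrC mulrAC.
rewrite -addn2 !exprD [(_ * g) ^+ j]exprMn.
move: ((d^-1 * u) ^+ j) => X.
have : (u - 1) * (u + 1) = 0 by rewrite mulrDr !mulrBl mul1r mulr1 -expr2 u2; ring.
move/eqP; rewrite mulf_eq0 subr_eq0 addr_eq0 => /orP[]/eqP -> ; field; exact: d0.
Qed.

Lemma alg0 (d u g : algC) : d != 0 -> d * d * (u * g / d) ^+ 1 = g * (d * u).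
Proof. by move=> d0; rewrite expr1; field. Qed.

Section Main.
Variables (gT : finGroupType) (G : {group gT}).

Lemma FSindE i : FSind 'chi[G]_i = nuR 'Chi_i.
Proof.
rewrite /FSind /nuR; congr (_ * _); apply: eq_bigr => x Gx.
by rewrite -irrRepr cfunE groupX // mulr1n expgS expg1 repr_mxM.
Qed.

Lemma nu_nonreal i : ~~ cfReal 'chi[G]_i -> FSind 'chi[G]_i = 0.
Proof. by rewrite FSindE -irrRepr; apply: FS_nonreal; apply: socle_irr. Qed.

Lemma nu_real i : cfReal 'chi[G]_i -> FSind 'chi[G]_i ^+ 2 = 1.
Proof. by rewrite FSindE -irrRepr; apply: FS_real; apply: socle_irr. Qed.

Lemma char_sum_i i g : g \in G ->
  \sum_(x in G) 'chi[G]_i (g * (x ^+ 2)^-1)%g =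
    FSind 'chi[G]_i * #|G|%:R / 'chi_i 1%g * 'chi_i g.
Proof.
move=> Gg; rewrite FSindE -irrRepr; apply: char_sum => //; apply: socle_irr.
Qed.

Lemma Nc_formula m g : g \in G ->
  #|G|%:R * (Nc G m g)%:R =
  \sum_i 'chi[G]_i 1%g * 'chi_i g * (FSind 'chi[G]_i * #|G|%:R / 'chi_i 1%g) ^+ m.
Proof.
elim: m g => [|m IH] g Gg.
  under eq_bigr do rewrite expr0 mulr1.
  have := congr1 (fun f : 'CF(G) => f g) (cfReg_sum G).
  rewrite /= cfRegE sum_cfunE Nc0 mulr_natr => ->.
  by apply: eq_bigr => i _; rewrite cfunE.
rewrite NcS natr_sum mulr_sumr.
under eq_bigr => x Gx do rewrite IH ?groupM ?groupV ?groupX //.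
rewrite exchange_big /=; apply: eq_bigr => i _.
under eq_bigr do rewrite mulrAC.
rewrite -mulr_sumr char_sum_i //.
by rewrite exprS; ring.
Qed.

Lemma IrrRE i : (i \in IrrR G) = cfReal 'chi[G]_i.
Proof. by rewrite inE. Qed.

Lemma sq_formula m : (0 < m)%N ->
  #|G|%:R * (sq_count G m)%:R =
  \sum_(i in IrrR G) 'chi[G]_i 1%g * 'chi_i 1%g * (FSind 'chi[G]_i * #|G|%:R / 'chi_i 1%g) ^+ m.
Proof.
move=> m0; rewrite sq_countE Nc_formula //.
rewrite (bigID (mem (IrrR G))) /= [X in _ + X]big1 ?addr0 // => i.
by rewrite IrrRE => /nu_nonreal ->; rewrite !mul0r expr0n eqn0Ngt m0 mulr0.
Qed.

Lemma sum_degFS_map (f : algC -> algC) :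
  \sum_(y <- degFS G) f y = \sum_(i in IrrR G) f ('chi[G]_i 1%g * FSind 'chi[G]_i).
Proof. by rewrite /degFS big_map big_enum. Qed.

Lemma size_degFS : size (degFS G) = kr G.
Proof. by rewrite /degFS size_map -cardE. Qed.

Lemma degFS_nz : 0 \notin degFS G.
Proof.
apply/negP => /mapP[i]; rewrite mem_enum IrrRE => /nu_real u2 /esym/eqP.
rewrite mulf_eq0 (negPf (irr1_neq0 i)) /= => /eqP u0.
by move: u2; rewrite u0 expr0n /= => /eqP; rewrite eq_sym oner_eq0.
Qed.

Lemma sum_degFS1 : \sum_(y <- degFS G) y = (sq_count G 1)%:R.
Proof.
apply: (mulfI (neq0CG G)); rewrite sq_formula // sum_degFS_map mulr_sumr.
by apply: eq_bigr => i _; rewrite alg0 ?irr1_neq0.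
Qed.

Lemma sum_degFSj j :
  #|G|%:R ^+ j.+1 * \sum_(y <- degFS G) y ^- j = (sq_count G j.+2)%:R.
Proof.
apply: (mulfI (neq0CG G)); rewrite sq_formula // sum_degFS_map !mulr_sumr.
apply: eq_bigr => i; rewrite IrrRE => R; rewrite alg1 ?irr1_neq0 ?nu_real //.
by rewrite mulrA -exprS.
Qed.

Lemma sq_count_pos : (0 < sq_count G 1)%N.
Proof.
apply/card_gt0P; exists [ffun _ => 1%g]; rewrite inE; apply/andP; split.
  by apply/forallP => i; rewrite ffunE group1.
by rewrite big_ord1 ffunE expg1n.
Qed.

End Main.

Theorem theoremA (gT hT : finGroupType) (G : {group gT}) (H : {group hT}) :
  #|G| = #|H| ->
  kr G = kr H ->
  (forall n : nat, (1 <= n <= (kr G).+1)%N -> sq_count G n = sq_count H n) ->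
  perm_eq (degFS G) (degFS H) /\ sq_count G 2 = (kr G * #|G|)%N.
Proof.
move=> oGH kGH sGH; split.
  apply: power_sums_perm; rewrite ?size_degFS ?degFS_nz //.
  - by rewrite !sum_degFS1 sGH // kr_ge0.
  - by rewrite sum_degFS1 pnatr_eq0 -lt0n sq_count_pos.
  move=> m /andP[m0 mk].
  apply: (mulfI (expf_neq0 m.+1 (neq0CG G))).
  rewrite sum_degFSj oGH sum_degFSj sGH //.
apply/eqP; rewrite -(eqr_nat algC) -sum_degFSj sum_degFS_map.
under eq_bigr do rewrite expr0 invr1.
by rewrite sumr_const expr1 natrM mulrC.
Qed.
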